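(* At a point of a framework, consider a tensor derivation $M(\cdot)$ acting on spinors by a matrix $M^\alpha_\beta$ and on vectors by a matrix $M^i_j$, so that $$M(\cdot)\bigl(T^\alpha_{i\beta}\bigr)=M^\alpha_\lambda T^\lambda_{i\beta}-T^\alpha_{i\lambda}M^\lambda_\beta-M^k_iT^\alpha_{k\beta}.$$ Then $M(\cdot)(T^\alpha_{i\beta})=0$ for all $i,\alpha,\beta$ if and only if there exist a scalar $a$ and a vector $b^k$ with $$M^\alpha_\beta=a\,1^\alpha_\beta+b^kT^\alpha_{k\beta},\qquad M^i_j=b^kT^i_{kj}.$$
   Context: Framework (pointwise data). $V$ is a real 4-dimensional vector space (''spinors'') with Greek indices; lowercase Latin indices index a 10-dimensional real vector space (the tangent space); summation convention. $T^k_{ij}$ are structure constants making the tangent space a Lie algebra isomorphic to $\mathfrak{so}(2,3)\cong\mathfrak{sp}(4,\mathbb R)$, and $T^\alpha_{i\beta}$ are matrices with $T^\alpha_{i\lambda}T^\lambda_{j\beta}-T^\alpha_{j\lambda}T^\lambda_{i\beta}=T^k_{ij}T^\alpha_{k\beta}$ giving the 4-dimensional irreducible real representation of this Lie algebra on $V$. $1^\alpha_\beta$ is the identity on $V$. *)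

(* Defs.v *)
From HB Require Import structures.
From mathcomp Require Import all_boot all_order all_algebra.
From mathcomp Require Import reals.
Set Implicit Arguments. Unset Strict Implicit. Unset Printing Implicit Defensive.
Import Order.TTheory GRing.Theory Num.Theory.
Local Open Scope ring_scope.

(* Conventions:
   Tv k i j  = T^k_{ij}   (structure constants of the 10-dim tangent Lie algebra)
   Ts a i b  = T^alpha_{i beta}  (spinor representation matrices)
   Ms a b    = M^alpha_beta,   Mv i j = M^i_j. *)

Section Defs.
Variable R : realType.

Definition Jsymp : 'M[R]_4 :=
  \matrix_(i < 4, j < 4)
    (if (i + 2 == j)%N then 1 else if (j + 2 == i)%N then -1 else 0).

Definition is_sp4 (A : 'M[R]_4) : Prop := A^T *m Jsymp + Jsymp *m A = 0.

(* The Lie algebra with structure constants Tv is isomorphic to sp(4,R):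
   a linear bijection R^10 -> sp(4,R) (given on the standard basis by phi)
   intertwining the brackets. *)
Definition iso_to_sp4 (Tv : 'I_10 -> 'I_10 -> 'I_10 -> R) : Prop :=
  exists phi : 'I_10 -> 'M[R]_4,
    [/\ forall i, is_sp4 (phi i),
        forall c : 'I_10 -> R, \sum_i c i *: phi i = 0 -> forall i, c i = 0,
        forall A, is_sp4 A -> exists c : 'I_10 -> R, A = \sum_i c i *: phi i
      & forall i j, phi i *m phi j - phi j *m phi i = \sum_k Tv k i j *: phi k].

Definition is_rep (Tv : 'I_10 -> 'I_10 -> 'I_10 -> R)
    (Ts : 'I_4 -> 'I_10 -> 'I_4 -> R) : Prop :=
  forall i j a b,
    \sum_l (Ts a i l * Ts l j b - Ts a j l * Ts l i b)
    = \sum_k Tv k i j * Ts a k b.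

Definition Tmat (Ts : 'I_4 -> 'I_10 -> 'I_4 -> R) (i : 'I_10) : 'M[R]_4 :=
  \matrix_(a < 4, b < 4) Ts a i b.

(* irreducibility over R: every subspace of R^4 (given as the row space of U,
   rows being transposed column vectors) invariant under all T_i is 0 or R^4. *)
Definition irreducible_rep (Ts : 'I_4 -> 'I_10 -> 'I_4 -> R) : Prop :=
  forall U : 'M[R]_4,
    (forall i, (U *m (Tmat Ts i)^T <= U)%MS) -> U = 0 \/ row_full U.

Definition Mderiv_T (Ts : 'I_4 -> 'I_10 -> 'I_4 -> R)
    (Ms : 'I_4 -> 'I_4 -> R) (Mv : 'I_10 -> 'I_10 -> R)
    (a : 'I_4) (i : 'I_10) (b : 'I_4) : R :=
  \sum_l Ms a l * Ts l i b - \sum_l Ts a i l * Ms l b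
  - \sum_k Mv k i * Ts a k b.

End Defs.

(* Main.v *)
Require Import Defs.
From HB Require Import structures.
From mathcomp Require Import all_boot all_order all_algebra.
From mathcomp Require Import reals.
From mathcomp Require Import ring lra.
Import Order.TTheory GRing.Theory Num.Theory.
Local Open Scope ring_scope.
Set Implicit Arguments. Unset Strict Implicit. Unset Printing Implicit Defensive.

Section LinAlg.
Variable R : realType.

Lemma dep_family m n (v : nat -> 'M[R]_(m, n)) :
  exists c : nat -> R, (exists2 k, (k <= m * n)%N & c k != 0) /\
    \sum_(k < (m * n).+1) c k *: v k = 0.
Proof.
pose A := \matrix_(k < (m * n).+1) mxvec (v k).
have : kermx A != 0.
  rewrite kermx_eq0 /row_free; apply/negP => /eqP H.
  by have := rank_leq_col A; rewrite H ltnn.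
case/rowV0Pn => r /submxP [D ->] Dn0.
pose r' := D *m kermx A.
exists (fun k => r' 0 (inord k)); split.
  have /existsP [k Hk] : [exists k, r' 0 k != 0].
    rewrite -negb_forall; apply: contra Dn0 => /forallP H.
    by apply/eqP/rowP => k; rewrite [RHS]mxE; apply/eqP/H.
  exists k; first by rewrite -ltnS ltn_ord.
  by rewrite inord_val.
apply/eqP; rewrite -mxvec_eq0 linear_sum /=.
have -> : \sum_(i < (m * n).+1) mxvec (r' 0 (inord i) *: v i) = r' *m A.
  rewrite mulmx_sum_row; apply: eq_bigr => i _.
  by rewrite inord_val linearZ /= rowK.
by rewrite /r' -mulmxA mulmx_ker mulmx0.
Qed.

Lemma eig_indep m n (D : 'M[R]_(m, n) -> 'M[R]_(m, n))
  (DD : forall x y, D (x + y) = D x + D y) (DZ : forall a x, D (a *: x) = a *: D x)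
  (v : nat -> 'M[R]_(m, n)) (lam : nat -> R) K :
  (forall k, (k < K)%N -> D (v k) = lam k *: v k) ->
  (forall i j, (i < K)%N -> (j < K)%N -> lam i = lam j -> i = j) ->
  forall c : nat -> R, \sum_(k < K) c k *: v k = 0 ->
  forall k, (k < K)%N -> c k *: v k = 0.
Proof.
have D0 : D 0 = 0 by have := DD 0 0; rewrite addr0 => /eqP; rewrite addrC -subr_eq subrr eq_sym => /eqP.
have Dsum : forall K' (g : nat -> 'M[R]_(m, n)), D (\sum_(k < K') g k) = \sum_(k < K') D (g k).
  move=> K' g; elim: K' => [|K' IH]; first by rewrite !big_ord0.
  by rewrite !big_ord_recr /= DD IH.
elim: K => [|K IH] Hv Hinj c Hs k Hk //.
have HvK : forall k, (k < K)%N -> D (v k) = lam k *: v k by move=> i Hi; apply: Hv; exact: ltnW.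
have HinjK : forall i j, (i < K)%N -> (j < K)%N -> lam i = lam j -> i = j.
  by move=> i j Hi Hj; apply: Hinj; exact: ltnW.
have H1 : \sum_(k < K) (c k * (lam k - lam K)) *: v k = 0.
  have E2 : \sum_(k < K.+1) (c k * lam k) *: v k = 0.
    rewrite -[RHS]D0 -[X in D X]Hs (Dsum _ (fun k => c k *: v k)); apply: eq_bigr => i _.
    by rewrite DZ Hv // scalerA.
  have E1 : \sum_(k < K.+1) (c k * lam K) *: v k = 0.
    rewrite -[RHS](scaler0 _ (lam K)) -[X in _ *: X]Hs scaler_sumr; apply: eq_bigr => i _.
    by rewrite scalerA mulrC.
  have := congr2 (fun x y => x - y) E2 E1; rewrite subrr -sumrB big_ord_recr /=.
  rewrite -scalerBl -mulrBr subrr mulr0 scale0r addr0 => E3.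
  by rewrite -[RHS]E3; apply: eq_bigr => i _; rewrite -scalerBl -mulrBr.
have Hlow : forall i, (i < K)%N -> c i *: v i = 0.
  move=> i Hi; have /eqP := IH HvK HinjK (fun k => c k * (lam k - lam K)) H1 i Hi.
  rewrite scaler_eq0 mulf_eq0 -orbA => /or3P [/eqP->|H|/eqP->];
    [by rewrite scale0r| |by rewrite scaler0].
  move: H; rewrite subr_eq0 => /eqP /(Hinj _ _ (ltnW Hi) (ltnSn K)) Eq.
  by move: Hi; rewrite Eq ltnn.
move: Hk; rewrite ltnS leq_eqVlt => /orP [/eqP ->|/Hlow //].
move: Hs; rewrite big_ord_recr /= big1 ?add0r // => i _; exact: Hlow.
Qed.

Lemma eig_finite m n (D : 'M[R]_(m, n) -> 'M[R]_(m, n))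
  (DD : forall x y, D (x + y) = D x + D y) (DZ : forall a x, D (a *: x) = a *: D x)
  (v : nat -> 'M[R]_(m, n)) (lam : nat -> R) :
  (forall k, (k <= m * n)%N -> D (v k) = lam k *: v k) ->
  (forall i j, (i <= m * n)%N -> (j <= m * n)%N -> lam i = lam j -> i = j) ->
  exists2 k, (k <= m * n)%N & v k = 0.
Proof.
move=> Hv Hinj; have [c [[k Hk ck] Hs]] := dep_family v.
exists k => //.
have := eig_indep DD DZ (K := (m * n).+1) (lam := lam) _ _ Hs Hk.
move=> /(_ (fun i Hi => Hv i Hi) (fun i j Hi Hj => Hinj i j Hi Hj)) /eqP.
by rewrite scaler_eq0 (negbTE ck) => /eqP.
Qed.

End LinAlg.
Section SL2.
Variable R : realType.

Definition pw (f : 'M[R]_4) k := iter k (mulmx f) 1%:M.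
Definition pv (f : 'M[R]_4) k (v : 'cV[R]_4) := pw f k *m v.

Lemma pv0 f v : pv f 0 v = v. Proof. by rewrite /pv /pw /= mul1mx. Qed.
Lemma pvS f k v : pv f k.+1 v = f *m pv f k v. Proof. by rewrite /pv /pw /= mulmxA. Qed.
Lemma pv_add f i j v : pv f (i + j) v = pv f i (pv f j v).
Proof. by elim: i => [|i IH]; rewrite ?add0n ?pv0 // addSn !pvS IH. Qed.
Lemma pv_shift f k v : pv f k.+1 v = pv f k (f *m v).
Proof. by rewrite -[k.+1]addn1 pv_add pvS pv0. Qed.
Lemma pvD f k v w : pv f k (v + w) = pv f k v + pv f k w.
Proof. by rewrite /pv mulmxDr. Qed.
Lemma pvZ f k a v : pv f k (a *: v) = a *: pv f k v.
Proof. by rewrite /pv scalemxAr. Qed.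
Lemma pvB f k v w : pv f k (v - w) = pv f k v - pv f k w.
Proof. by rewrite /pv mulmxBr. Qed.
Lemma pv_0 f k : pv f k 0 = 0.
Proof. by rewrite /pv mulmx0. Qed.

Lemma nilpotM (h f : 'M[R]_4) (c : R) : c != 0 -> h *m f - f *m h = c *: f ->
  exists N, forall v, pv f N v = 0.
Proof.
move=> cn0 Hhf.
pose D (X : 'M[R]_4) := h *m X - X *m h.
have DD : forall x y, D (x + y) = D x + D y.
  move=> x y; rewrite /D mulmxDr mulmxDl opprD addrACA //.
have DZ : forall a x, D (a *: x) = a *: D x.
  by move=> a x; rewrite /D -scalemxAr -scalemxAl scalerBr.
have Hv : forall k, (k <= 4 * 4)%N -> D (pw f k) = (k%:R * c) *: pw f k.
  move=> k _; elim: k => [|k IH].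
    by rewrite /D /pw /= mul1mx mulmx1 subrr mul0r scale0r.
  have -> : pw f k.+1 = f *m pw f k by [].
  have hf : h *m f = f *m h + c *: f by rewrite -Hhf addrC subrK.
  have hP : h *m pw f k = pw f k *m h + (k%:R * c) *: pw f k by rewrite -IH /D addrC subrK.
  have E1 : h *m (f *m pw f k) = (f *m pw f k) *m h + (k%:R * c) *: (f *m pw f k) + c *: (f *m pw f k).
    rewrite mulmxA hf mulmxDl -mulmxA hP mulmxDr -scalemxAl -scalemxAr !mulmxA.
    by [].
  rewrite /D E1; move: (f *m pw f k) ((f *m pw f k) *m h) => X Y.
  by apply/matrixP => i j; rewrite !mxE mulrSr; ring.
have Hinj : forall i j, (i <= 4 * 4)%N -> (j <= 4 * 4)%N -> i%:R * c = j%:R * c -> i = j.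
  by move=> i j _ _ /(mulIf cn0) /eqP; rewrite eqr_nat => /eqP.
have [k _ Hk] := eig_finite DD DZ Hv Hinj.
by exists k => v; rewrite /pv Hk mul0mx.
Qed.

Lemma last_nonzero (g : nat -> 'cV[R]_4) N : g 0%N != 0 -> g N = 0 ->
  exists j, [/\ (j < N)%N, g j != 0 & g j.+1 = 0].
Proof.
elim: N => [|N IH] g0 gN; first by rewrite gN eqxx in g0.
case: (eqVneq (g N) 0) => [/IH [] // j [H1 H2 H3]|H]; last by exists N.
by exists j; split=> //; exact: ltnW.
Qed.

Lemma killer (g : 'M[R]_4) M (P : 'cV[R]_4 -> Prop) :
  (forall v, pv g M v = 0) -> (forall v, P v -> P (g *m v)) ->
  forall w, P w -> w != 0 -> exists w', [/\ P w', w' != 0 & g *m w' = 0].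
Proof.
move=> Hn Hp w Pw wn0.
have g0 : pv g 0 w != 0 by rewrite pv0.
have [j [_ Hj Hj1]] := @last_nonzero (fun j => pv g j w) M g0 (Hn w).
exists (pv g j w); split => //; last by rewrite -pvS.
by elim: (j) => [|k IH]; rewrite ?pv0 // pvS; apply: Hp.
Qed.

Variables (h e f : 'M[R]_4).
Hypothesis Hhe : h *m e - e *m h = 2%:R *: e.
Hypothesis Hhf : h *m f - f *m h = - (2%:R *: f).
Hypothesis Hef : e *m f - f *m e = h.
Variable N : nat.
Hypothesis Hnil : forall v, pv f N v = 0.

Lemma hEv (v : 'cV[R]_4) : h *m (e *m v) = e *m (h *m v) + 2%:R *: (e *m v).
Proof. by rewrite scalemxAl -Hhe !mulmxA mulmxBl addrC subrK. Qed.
Lemma hFv (v : 'cV[R]_4) : h *m (f *m v) = f *m (h *m v) - 2%:R *: (f *m v).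
Proof. by rewrite -scaleNr scalemxAl scaleNr -Hhf !mulmxA mulmxBl addrC subrK. Qed.
Lemma eFv (v : 'cV[R]_4) : e *m (f *m v) = f *m (e *m v) + h *m v.
Proof. by rewrite -[in RHS]Hef !mulmxA mulmxBl addrC subrK. Qed.


Lemma ef_pow k w : e *m pv f k.+1 w =
  pv f k.+1 (e *m w) + k.+1%:R *: pv f k (h *m w - k%:R *: w).
Proof.
elim: k w => [|k IH] w.
  by rewrite !pvS !pv0 eFv scale1r scale0r subr0.
rewrite [pv f k.+2 w]pv_shift IH eFv hFv pvD !pvB !pvZ -!pv_shift.
move: (pv f k.+2 (e *m w)) (pv f k.+1 (h *m w)) (pv f k.+1 w) => a b c.
apply/matrixP => i j; rewrite !mxE -!natr1; ring.
Qed.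

Lemma descent (P : 'cV[R]_4 -> Prop) :
  (forall v c, P v -> P (h *m v - c *: v)) -> (forall v, P v -> e *m v = 0) ->
  forall w, P w -> w != 0 -> exists w' (m : nat), [/\ P w', w' != 0 & h *m w' = m%:R *: w'].
Proof.
move=> Pcl Pe w Pw wn0.
pose g := fix g j := if j is j'.+1 then h *m g j' - (N.-1 - j')%:R *: g j' else w.
have Hg : forall j, (j <= N)%N -> pv f (N - j) (g j) = 0 /\ P (g j).
  elim=> [|j IH] HjN; first by rewrite subn0 Hnil.
  have [IH1 IH2] := IH (ltnW HjN).
  have Ek : (N - j = (N.-1 - j).+1)%N by move: HjN; clear; case: N => //= n; rewrite ltnS => H; rewrite subSn.
  split; last exact: Pcl.
  have := ef_pow (N.-1 - j) (g j); rewrite -Ek IH1 mulmx0 (Pe _ IH2) pv_0 add0r.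
  move=> /esym /eqP; rewrite scaler_eq0 pnatr_eq0 /= => /eqP H.
  have -> : (N - j.+1 = N.-1 - j)%N by rewrite subnS -subn1 subnAC subn1.
  by move/eqP: H; rewrite subn_eq0 leqNgt HjN /= => /eqP.
have gN : g N = 0 by have [H _] := Hg N (leqnn N); rewrite subnn pv0 in H.
have [j [jN gj gj1]] := @last_nonzero g N wn0 gN.
have [_ Pj] := Hg j (ltnW jN).
exists (g j), (N.-1 - j)%N; split => //.
by move/eqP: gj1; rewrite /= subr_eq0 => /eqP.
Qed.

Section String.
Variables (u : 'cV[R]_4) (mu : R).
Hypotheses (Heu : e *m u = 0) (Hhu : h *m u = mu *: u).

Lemma hpv j : h *m pv f j u = (mu - 2%:R * j%:R) *: pv f j u.
Proof.
elim: j => [|j IH]; first by rewrite pv0 Hhu mulr0 subr0.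
rewrite pvS hFv IH -scalemxAr.
move: (f *m pv f j u) => a; apply/matrixP => i k; rewrite !mxE -!natr1; ring.
Qed.

Lemma epv j : e *m pv f j.+1 u = (j.+1%:R * (mu - j%:R)) *: pv f j u.
Proof.
elim: j => [|j IH]; first by rewrite pvS pv0 eFv Heu mulmx0 add0r Hhu mul1r subr0.
rewrite [pv f j.+2 u]pvS eFv IH hpv -scalemxAr -pvS.
move: (pv f j.+1 u) => a; apply/matrixP => i k; rewrite !mxE -!natr1; ring.
Qed.

Lemma D1a : u != 0 -> exists m : nat,
  [/\ mu = m%:R, pv f m.+1 u = 0 & forall j, (j <= m)%N -> pv f j u != 0].
Proof.
move=> un0.
have g0 : pv f 0 u != 0 by rewrite pv0.
have [m [_ Hm Hm1]] := @last_nonzero (fun j => pv f j u) N g0 (Hnil u).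
exists m; split => //.
  have := epv m; rewrite Hm1 mulmx0 => /esym /eqP; rewrite scaler_eq0 (negbTE Hm) orbF.
  by rewrite mulf_eq0 pnatr_eq0 /= subr_eq0 => /eqP.
move=> j jm; apply: contra Hm => /eqP Hj.
by rewrite -(subnK jm) pv_add Hj pv_0.
Qed.

Lemma D1b (k : nat) : mu = k%:R -> pv f k.+1 u = 0.
Proof.
move=> Hmu; case: (eqVneq u 0) => [->|un0]; first by rewrite pv_0.
have [m [Hm Hm1 _]] := D1a un0.
by move: Hm; rewrite Hmu => /eqP; rewrite eqr_nat => /eqP ->.
Qed.

Lemma D1c (k : nat) : mu = k%:R -> u != 0 -> forall j, (j <= k)%N -> pv f j u != 0.
Proof.
move=> Hmu un0; have [m [Hm _ Hj]] := D1a un0.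
by move: Hm; rewrite Hmu => /eqP; rewrite eqr_nat => /eqP ->.
Qed.

Lemma D1nat : u != 0 -> exists m : nat, mu = m%:R.
Proof. by move=> /D1a [m [Hm _ _]]; exists m. Qed.

End String.

End SL2.
Section Conc.
Context {R : realType}.

Definition mkz (f : nat -> nat -> int) : 'M[R]_4 := \matrix_(i, j) (f i j)%:~R.
Definition prz (f g : nat -> nat -> int) i j : int :=
  f i 0%N * g 0%N j + f i 1%N * g 1%N j + f i 2%N * g 2%N j + f i 3%N * g 3%N j.
Definition brz f g i j : int := prz f g i j - prz g f i j.
Definition br (A B : 'M[R]_4) := A *m B - B *m A.

Lemma mkz_mul f g : mkz f *m mkz g = mkz (prz f g).
Proof.
apply/matrixP => i j; rewrite !mxE !big_ord_recl big_ord0 !mxE /prz /=.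
by rewrite addr0 !rmorphD !rmorphM /= !addrA.
Qed.
Lemma mkz_br f g : br (mkz f) (mkz g) = mkz (brz f g).
Proof. by rewrite /br !mkz_mul; apply/matrixP => i j; rewrite !mxE /brz rmorphB. Qed.
Lemma mkz_ext f g : (forall i j, (i < 4)%N -> (j < 4)%N -> f i j = g i j) -> mkz f = mkz g.
Proof. by move=> H; apply/matrixP => i j; rewrite !mxE H. Qed.
Lemma mkz_scalen (k : nat) f : k%:R *: mkz f = mkz (fun i j => k%:Z * f i j).
Proof. by apply/matrixP => i j; rewrite !mxE rmorphM. Qed.
Lemma mkz_opp f : - mkz f = mkz (fun i j => - f i j).
Proof. by apply/matrixP => i j; rewrite !mxE rmorphN. Qed.
Lemma mkz_add f g : mkz f + mkz g = mkz (fun i j => f i j + g i j).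
Proof. by apply/matrixP => i j; rewrite !mxE rmorphD. Qed.
Lemma mkz_sub f g : mkz f - mkz g = mkz (fun i j => f i j - g i j).
Proof. by apply/matrixP => i j; rewrite !mxE rmorphB. Qed.
Lemma mkz0 : 0 = mkz (fun _ _ => 0).
Proof. by apply/matrixP => i j; rewrite !mxE. Qed.
Lemma mkz_tr f : (mkz f)^T = mkz (fun i j => f j i).
Proof. by apply/matrixP => i j; rewrite !mxE. Qed.

Definition dz (a b : nat) : nat -> nat -> int := fun i j => if (i == a) && (j == b) then 1%Z else 0%Z.
Definition Jz (i j : nat) : int := match i, j with 0%N,2%N => 1%Z | 1%N,3%N => 1%Z
   | 2%N,0%N => (-1)%Z | 3%N,1%N => (-1)%Z | _,_ => 0%Z end.

Lemma JsympE : Jsymp R = mkz Jz.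
Proof.
apply/matrixP; case=> [[|[|[|[|?]]]] ?] //; case=> [[|[|[|[|?]]]] ?] //; by rewrite !mxE.
Qed.

Definition H1 := mkz (fun i j => dz 0 0 i j - dz 2 2 i j).
Definition H2 := mkz (fun i j => dz 1 1 i j - dz 3 3 i j).
Definition HA := mkz (fun i j => dz 0 0 i j - dz 2 2 i j - dz 1 1 i j + dz 3 3 i j).
Definition HB := mkz (fun i j => dz 0 0 i j - dz 2 2 i j + dz 1 1 i j - dz 3 3 i j).
Definition Xm := mkz (fun i j => dz 0 1 i j - dz 3 2 i j).
Definition Ym := mkz (fun i j => dz 1 0 i j - dz 2 3 i j).
Definition Em := mkz (dz 0 2).
Definition Fm := mkz (dz 2 0).
Definition Ep := mkz (dz 1 3).
Definition Fp := mkz (dz 3 1).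
Definition Bm := mkz (fun i j => dz 0 3 i j + dz 1 2 i j).
Definition Cm := mkz (fun i j => dz 3 0 i j + dz 2 1 i j).

Ltac concz := rewrite ?/br /H1 /H2 /HA /HB /Xm /Ym /Em /Fm /Ep /Fp /Bm /Cm
  ?(mkz_br, mkz_scalen, mkz_opp, mkz_add, mkz_sub, mkz_mul) ?mkz0
  ?(mkz_br, mkz_scalen, mkz_opp, mkz_add, mkz_sub, mkz_mul);
  apply: mkz_ext; do 4?[case=> //]; do 4?[case=> //].

Lemma HAE : HA = H1 - H2. Proof. rewrite /HA /H1 /H2 mkz_sub; apply: mkz_ext; do 4?[case=> //]; do 4?[case=> //]. Qed.
Lemma HBE : HB = H1 + H2. Proof. rewrite /HB /H1 /H2 mkz_add; apply: mkz_ext; do 4?[case=> //]; do 4?[case=> //]. Qed.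

Lemma b1 : br H1 Em = 2%:R *: Em. Proof. concz. Qed.
Lemma b2 : br H1 Fm = - (2%:R *: Fm). Proof. concz. Qed.
Lemma b3 : br Em Fm = H1. Proof. concz. Qed.
Lemma b4 : br H2 Ep = 2%:R *: Ep. Proof. concz. Qed.
Lemma b5 : br H2 Fp = - (2%:R *: Fp). Proof. concz. Qed.
Lemma b6 : br Ep Fp = H2. Proof. concz. Qed.
Lemma b7 : br HA Xm = 2%:R *: Xm. Proof. concz. Qed.
Lemma b8 : br HA Ym = - (2%:R *: Ym). Proof. concz. Qed.
Lemma b9 : br Xm Ym = HA. Proof. concz. Qed.
Lemma b10 : br HB Bm = 2%:R *: Bm. Proof. concz. Qed.
Lemma b11 : br HB Cm = - (2%:R *: Cm). Proof. concz. Qed.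
Lemma b12 : br Bm Cm = HB. Proof. concz. Qed.
Lemma b13 : br H1 Bm = Bm. Proof. concz. Qed.
Lemma b14 : br H1 Xm = Xm. Proof. concz. Qed.
Lemma b15 : br Em Ep = 0. Proof. concz. Qed.
Lemma b16 : br Em Bm = 0. Proof. concz. Qed.
Lemma b17 : br Ep Bm = 0. Proof. concz. Qed.
Lemma b18 : br Xm Em = 0. Proof. concz. Qed.
Lemma b19 : br Xm Ep = Bm. Proof. concz. Qed.
Lemma b20 : br Xm Bm = 2%:R *: Em. Proof. concz. Qed.
Lemma b21 : br H1 Ep = 0. Proof. concz. Qed.
Lemma b22 : br H2 Em = 0. Proof. concz. Qed.
Lemma b23 : br H2 Bm = Bm. Proof. concz. Qed.
Lemma b24 : br H2 Xm = - Xm. Proof. concz. Qed.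
Lemma b25 : br H1 H2 = 0. Proof. concz. Qed.
Lemma b26 : br H1 Ym = - Ym. Proof. concz. Qed.
Lemma b27 : br H2 Ym = Ym. Proof. concz. Qed.
Lemma b28 : br H1 Cm = - Cm. Proof. concz. Qed.
Lemma b29 : br H2 Cm = - Cm. Proof. concz. Qed.
Lemma b30 : br H2 Fm = 0. Proof. concz. Qed.
Lemma b31 : br H1 Fp = 0. Proof. concz. Qed.
Lemma b32 : br Ep Fm = 0. Proof. concz. Qed.
Lemma b33 : br Em Ym = - Bm. Proof. concz. Qed.
Lemma b34 : br Ep Ym = 0. Proof. concz. Qed.
Lemma b35 : br Fp Ym = Cm. Proof. concz. Qed.
Lemma b36 : br Bm Ym = - (2%:R *: Ep). Proof. concz. Qed.
Lemma b37 : br Cm Ym = 2%:R *: Fm. Proof. concz. Qed.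
Lemma b38 : br Xm Fm = - Cm. Proof. concz. Qed.
Lemma b39 : br Ym Fm = 0. Proof. concz. Qed.
Lemma b40 : br Fp Fm = 0. Proof. concz. Qed.
Lemma b41 : br Bm Fm = Ym. Proof. concz. Qed.
Lemma b42 : br Cm Fm = 0. Proof. concz. Qed.
Lemma b43 : br Em Cm = Xm. Proof. concz. Qed.
Lemma b44 : br Xm Cm = - (2%:R *: Fp). Proof. concz. Qed.
Lemma b45 : br Ep Cm = Ym. Proof. concz. Qed.
Lemma b46 : br Fp Cm = 0. Proof. concz. Qed.

Ltac spz := rewrite /is_sp4 /H1 /H2 /HA /HB /Xm /Ym /Em /Fm /Ep /Fp /Bm /Cm JsympE mkz_tr !mkz_mul mkz_add mkz0;
  apply: mkz_ext; do 4?[case=> //]; do 4?[case=> //].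

Lemma spH1 : is_sp4 H1. Proof. spz. Qed.
Lemma spH2 : is_sp4 H2. Proof. spz. Qed.
Lemma spHA : is_sp4 HA. Proof. spz. Qed.
Lemma spHB : is_sp4 HB. Proof. spz. Qed.
Lemma spX : is_sp4 Xm. Proof. spz. Qed.
Lemma spY : is_sp4 Ym. Proof. spz. Qed.
Lemma spE : is_sp4 Em. Proof. spz. Qed.
Lemma spF : is_sp4 Fm. Proof. spz. Qed.
Lemma spEp : is_sp4 Ep. Proof. spz. Qed.
Lemma spFp : is_sp4 Fp. Proof. spz. Qed.
Lemma spB : is_sp4 Bm. Proof. spz. Qed.
Lemma spC : is_sp4 Cm. Proof. spz. Qed.

Definition o0 : 'I_4 := @Ordinal 4 0 isT.
Definition o1 : 'I_4 := @Ordinal 4 1 isT.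
Definition o2 : 'I_4 := @Ordinal 4 2 isT.
Definition o3 : 'I_4 := @Ordinal 4 3 isT.

Lemma lo0 : (ord0 : 'I_4) = o0. Proof. exact: val_inj. Qed.
Lemma lo1 : lift ord0 (ord0 : 'I_3) = o1. Proof. exact: val_inj. Qed.
Lemma lo2 : lift ord0 (lift ord0 (ord0 : 'I_2)) = o2. Proof. exact: val_inj. Qed.
Lemma lo3 : lift ord0 (lift ord0 (lift ord0 (ord0 : 'I_1))) = o3. Proof. exact: val_inj. Qed.
Ltac normo := rewrite ?lo3 ?lo2 ?lo1 ?lo0.

Lemma ord4P (P : 'I_4 -> Prop) : P o0 -> P o1 -> P o2 -> P o3 -> forall i, P i.
Proof.
move=> P0 P1 P2 P3; case=> [[|[|[|[|?]]]] Hi] //.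
- by rewrite (bool_irrelevance Hi isT).
- by rewrite (bool_irrelevance Hi isT).
- by rewrite (bool_irrelevance Hi isT).
- by rewrite (bool_irrelevance Hi isT).
Qed.

Lemma mx4P (A B : 'M[R]_4) :
  (forall i j, i \in [:: o0; o1; o2; o3] -> j \in [:: o0; o1; o2; o3] -> A i j = B i j) -> A = B.
Proof.
move=> H; apply/matrixP; apply: ord4P; apply: ord4P; apply: H => //.
Qed.

Lemma sp4_rel (A : 'M[R]_4) : is_sp4 A ->
  (A o2 o2 = - A o0 o0 /\ A o3 o3 = - A o1 o1 /\ A o2 o3 = - A o1 o0) /\
  (A o3 o2 = - A o0 o1 /\ A o1 o2 = A o0 o3 /\ A o2 o1 = A o3 o0).
Proof.
rewrite /is_sp4 JsympE => /matrixP H.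
have h02 := H o0 o2; have h13 := H o1 o3; have h12 := H o1 o2.
have h03 := H o0 o3; have h01 := H o0 o1; have h23 := H o2 o3.
move: h02 h13 h12 h03 h01 h23; rewrite !mxE !big_ord_recl !big_ord0 !mxE /=; normo.
move=> *; do !split; lra.
Qed.

Lemma sp4_dec (A : 'M[R]_4) : is_sp4 A ->
  A = A o0 o0 *: H1 + A o1 o1 *: H2 + A o0 o1 *: Xm + A o1 o0 *: Ym + A o0 o2 *: Em
    + A o2 o0 *: Fm + A o1 o3 *: Ep + A o3 o1 *: Fp + A o0 o3 *: Bm + A o3 o0 *: Cm.
Proof.
move/sp4_rel => [[r1 [r2 r3]] [r4 [r5 r6]]].
apply: mx4P => i j; rewrite !inE => /or4P [] /eqP -> /or4P [] /eqP ->;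
  rewrite !mxE /=; lra.
Qed.


Lemma key_norm (M A : 'M[R]_4) : is_sp4 A -> is_sp4 (M *m A - A *m M) ->
  A^T *m (M^T *m Jsymp R + Jsymp R *m M) + (M^T *m Jsymp R + Jsymp R *m M) *m A = 0.
Proof.
rewrite /is_sp4; set J := Jsymp R => HA HMA.
have E1 : A^T *m J = - (J *m A) by apply/eqP; rewrite -subr_eq0 opprK HA.
move: HMA; rewrite linearB /= !trmx_mul mulmxBl mulmxBr -!mulmxA E1 !mulmxA.
rewrite mulmxDr mulmxDl !mulmxA E1.
rewrite !mulmxN !mulNmx !mulmxA.
move: (A^T *m M^T *m J) (M^T *m J *m A) (J *m M *m A) (J *m A *m M) => x y z w.
move=> H; rewrite -[RHS]H; apply/matrixP => ? ?; rewrite !mxE; ring.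
Qed.

Lemma Jtr : (Jsymp R)^T = - Jsymp R.
Proof. rewrite JsympE mkz_tr mkz_opp; apply: mkz_ext; do 4?[case=> //]; do 4?[case=> //]. Qed.

Lemma EN_lemma (N : 'M[R]_4) : H1^T *m N + N *m H1 = 0 -> Xm^T *m N + N *m Xm = 0 ->
  N^T = - N -> N = N o0 o2 *: Jsymp R.
Proof.
rewrite JsympE /H1 /Xm => /matrixP hA /matrixP hB /matrixP hC.
have a01 := hA o0 o1; have a03 := hA o0 o3; have a12 := hA o1 o2; have a23 := hA o2 o3.
have b12 := hB o1 o2.
have c00 := hC o0 o0; have c01 := hC o0 o1; have c02 := hC o0 o2; have c03 := hC o0 o3; have c10 := hC o1 o0; have c11 := hC o1 o1; have c12 := hC o1 o2; have c13 := hC o1 o3; have c20 := hC o2 o0; have c21 := hC o2 o1; have c22 := hC o2 o2; have c23 := hC o2 o3; have c30 := hC o3 o0; have c31 := hC o3 o1; have c32 := hC o3 o2; have c33 := hC o3 o3;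
rewrite !mxE !big_ord_recl !big_ord0 !mxE /= in a01 a03 a12 a23 b12.
rewrite ?lo3 ?lo2 ?lo1 ?lo0 in a01 a03 a12 a23 b12.
rewrite !mxE in c00 c01 c02 c03 c10 c11 c12 c13 c20 c21 c22 c23 c30 c31 c32 c33.
apply: mx4P => i j; rewrite !inE => /or4P [] /eqP -> /or4P [] /eqP ->;
  rewrite !mxE /=; lra.
Qed.

Lemma lin_fact (x y z : 'M[R]_4) (n : R) :
  x - (n / 2%:R) *: z + (y - (n / 2%:R) *: z) = (x + y) - n *: z.
Proof. by apply/matrixP => ? ?; rewrite !mxE; field. Qed.

Lemma norm_sp4 (M : 'M[R]_4) : is_sp4 (M *m H1 - H1 *m M) -> is_sp4 (M *m Xm - Xm *m M) ->
  exists c, is_sp4 (M - c%:M).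
Proof.
move=> HH1 HX.
have h1 := key_norm spH1 HH1; have hx := key_norm spX HX.
have NA : (M^T *m Jsymp R + Jsymp R *m M)^T = - (M^T *m Jsymp R + Jsymp R *m M).
  by rewrite linearD /= !trmx_mul trmxK Jtr mulmxN mulNmx opprD addrC.
have EN := EN_lemma h1 hx NA.
move: EN; set N := M^T *m Jsymp R + Jsymp R *m M; set n := N o0 o2 => EN.
exists (n / 2%:R).
rewrite /is_sp4 linearB /= tr_scalar_mx mulmxBl mulmxBr mul_scalar_mx mul_mx_scalar.
by rewrite lin_fact -/N -EN subrr.
Qed.
End Conc.
Section Rep.
Variables (R : realType) (Tv : 'I_10 -> 'I_10 -> 'I_10 -> R)
  (Ts : 'I_4 -> 'I_10 -> 'I_4 -> R) (phi : 'I_10 -> 'M[R]_4).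
Hypothesis phsp : forall i, is_sp4 (phi i).
Hypothesis phind : forall c : 'I_10 -> R, \sum_i c i *: phi i = 0 -> forall i, c i = 0.
Hypothesis phspan : forall A, is_sp4 A -> exists c : 'I_10 -> R, A = \sum_i c i *: phi i.
Hypothesis phbr : forall i j, phi i *m phi j - phi j *m phi i = \sum_k Tv k i j *: phi k.
Hypothesis Hrep : is_rep Tv Ts.
Hypothesis Hirr : irreducible_rep Ts.

Local Notation T := (Tmat Ts).
Local Notation br := (@br R).

Lemma Tbr i j : br (T i) (T j) = \sum_k Tv k i j *: T k.
Proof.
apply/matrixP => a b; rewrite /br summxE !mxE.
under [RHS]eq_bigr => k _ do rewrite !mxE.
rewrite -Hrep sumrB; congr (_ - _); apply: eq_bigr => l _; by rewrite !mxE.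
Qed.

Lemma br_comb (F : 'I_10 -> 'M[R]_4)
  (HF : forall i j, br (F i) (F j) = \sum_k Tv k i j *: F k) (a b : 'I_10 -> R) :
  br (\sum_i a i *: F i) (\sum_j b j *: F j) =
  \sum_k (\sum_i \sum_j a i * b j * Tv k i j) *: F k.
Proof.
have E : br (\sum_i a i *: F i) (\sum_j b j *: F j) =
   \sum_i \sum_j (a i * b j) *: br (F i) (F j).
  have E1 : (\sum_i a i *: F i) *m (\sum_j b j *: F j) =
     \sum_i \sum_j (a i * b j) *: (F i *m F j).
    rewrite mulmx_suml; apply: eq_bigr => i _; rewrite mulmx_sumr; apply: eq_bigr => j _.
    by rewrite -scalemxAl -scalemxAr scalerA.
  have E2 : (\sum_j b j *: F j) *m (\sum_i a i *: F i) =
     \sum_i \sum_j (a i * b j) *: (F j *m F i).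
    rewrite mulmx_suml exchange_big /=; apply: eq_bigr => i _; rewrite mulmx_sumr.
    apply: eq_bigr => j _.
    by rewrite -scalemxAl -scalemxAr scalerA mulrC.
  rewrite /br E1 E2 -sumrB; apply: eq_bigr => i _; rewrite -sumrB; apply: eq_bigr => j _.
  by rewrite scalerBr.
rewrite E.
under eq_bigr => i _ do under eq_bigr => j _ do rewrite HF scaler_sumr.
rewrite [RHS](eq_bigr (fun k => \sum_i \sum_j (a i * b j * Tv k i j) *: F k)); last first.
  by move=> k _; rewrite scaler_suml; apply: eq_bigr => i _; rewrite scaler_suml.
rewrite [RHS]exchange_big /=; apply: eq_bigr => i _.
rewrite [RHS]exchange_big /=; apply: eq_bigr => j _.
by apply: eq_bigr => k _; rewrite scalerA.
Qed.

Definition Phi : 'M[R]_(10, 4 * 4) := \matrix_(i < 10) mxvec (phi i).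
Definition coord (A : 'M[R]_4) := mxvec A *m pinvmx Phi.
Definition Sr (A : 'M[R]_4) := \sum_i coord A 0 i *: T i.

Lemma comb_vec (c : 'I_10 -> R) : mxvec (\sum_i c i *: phi i) = (\row_i c i) *m Phi.
Proof.
rewrite mulmx_sum_row linear_sum; apply: eq_bigr => i _.
by rewrite linearZ /= rowK mxE.
Qed.

Lemma S_spec (A : 'M[R]_4) (c : 'I_10 -> R) : A = \sum_i c i *: phi i -> Sr A = \sum_i c i *: T i.
Proof.
move=> HA.
have sub : (mxvec A <= Phi)%MS by apply/submxP; exists (\row_i c i); rewrite HA comb_vec.
have E := mulmxKpV sub.
have E2 : \sum_i coord A 0 i *: phi i = A.
  apply: (can_inj mxvecK); rewrite comb_vec -[RHS]E; congr (_ *m _).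
  by apply/rowP => i; rewrite mxE.
have Hc : forall i, coord A 0 i = c i.
  move=> i; apply/eqP; rewrite -subr_eq0; apply/eqP.
  apply: (phind (c := fun i => coord A 0 i - c i)).
  under eq_bigr => j _ do rewrite scalerBl.
  by rewrite sumrB E2 -HA subrr.
by rewrite /Sr; apply: eq_bigr => i _; rewrite Hc.
Qed.

Lemma S_phi i : Sr (phi i) = T i.
Proof.
have H : forall (F : 'I_10 -> 'M[R]_4), \sum_j (i == j)%:R *: F j = F i.
  move=> F; rewrite (bigD1 i) //= eqxx scale1r big1 ?addr0 // => j Hj.
  by rewrite eq_sym (negbTE Hj) scale0r.
by rewrite (S_spec (c := fun j => (i == j)%:R)) ?H.
Qed.

Lemma sp_lin (A B : 'M[R]_4) a b : is_sp4 A -> is_sp4 B -> is_sp4 (a *: A + b *: B).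
Proof.
rewrite /is_sp4 => HA HB.
rewrite linearD !linearZ /= mulmxDl mulmxDr -!scalemxAl -!scalemxAr.
by rewrite addrACA -!scalerDr HA HB !scaler0 addr0.
Qed.
Lemma sp0 : is_sp4 (0 : 'M[R]_4).
Proof. by rewrite /is_sp4 trmx0 mul0mx mulmx0 addr0. Qed.
Lemma sp_add (A B : 'M[R]_4) : is_sp4 A -> is_sp4 B -> is_sp4 (A + B).
Proof. by move=> HA HB; have := sp_lin 1 1 HA HB; rewrite !scale1r. Qed.
Lemma sp_scale (A : 'M[R]_4) a : is_sp4 A -> is_sp4 (a *: A).
Proof. by move=> HA; have := sp_lin a 0 HA HA; rewrite scale0r addr0. Qed.
Lemma sp_opp (A : 'M[R]_4) : is_sp4 A -> is_sp4 (- A).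
Proof. by move=> HA; rewrite -scaleN1r; apply: sp_scale. Qed.
Lemma sp_sub (A B : 'M[R]_4) : is_sp4 A -> is_sp4 B -> is_sp4 (A - B).
Proof. by move=> HA HB; apply: sp_add => //; apply: sp_opp. Qed.
Lemma sp_sum (c : 'I_10 -> R) : is_sp4 (\sum_i c i *: phi i).
Proof.
apply: (big_ind (@is_sp4 R)); [exact: sp0 | exact: sp_add | move=> i _; exact: sp_scale].
Qed.

Lemma S_lin (A B : 'M[R]_4) a b : is_sp4 A -> is_sp4 B -> Sr (a *: A + b *: B) = a *: Sr A + b *: Sr B.
Proof.
move=> /phspan [ca HA] /phspan [cb HB].
rewrite (S_spec (c := fun i => a * ca i + b * cb i)); last first.
  by rewrite HA HB !scaler_sumr -big_split; apply: eq_bigr => i _; rewrite scalerDl !scalerA.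
rewrite (S_spec HA) (S_spec HB) !scaler_sumr -big_split; apply: eq_bigr => i _.
by rewrite scalerDl !scalerA.
Qed.
Lemma S_add (A B : 'M[R]_4) : is_sp4 A -> is_sp4 B -> Sr (A + B) = Sr A + Sr B.
Proof. by move=> HA HB; have := S_lin 1 1 HA HB; rewrite !scale1r. Qed.
Lemma S_scale (A : 'M[R]_4) a : is_sp4 A -> Sr (a *: A) = a *: Sr A.
Proof. by move=> HA; have := S_lin a 0 HA HA; rewrite !scale0r !addr0. Qed.
Lemma S_opp (A : 'M[R]_4) : is_sp4 A -> Sr (- A) = - Sr A.
Proof. by move=> HA; rewrite -scaleN1r S_scale // scaleN1r. Qed.
Lemma S_sub (A B : 'M[R]_4) : is_sp4 A -> is_sp4 B -> Sr (A - B) = Sr A - Sr B.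
Proof. by move=> HA HB; rewrite S_add ?S_opp //; apply: sp_opp. Qed.
Lemma S_0 : Sr 0 = 0.
Proof. by have := S_scale 0 sp0; rewrite !scale0r. Qed.

Lemma S_br (A B : 'M[R]_4) : is_sp4 A -> is_sp4 B -> Sr (br A B) = br (Sr A) (Sr B).
Proof.
move=> /phspan [ca HA] /phspan [cb HB].
have E : br A B = \sum_k (\sum_i \sum_j ca i * cb j * Tv k i j) *: phi k.
  by rewrite HA HB br_comb.
by rewrite (S_spec E) (S_spec HA) (S_spec HB) br_comb //; exact: Tbr.
Qed.

Lemma Sv (A B C : 'M[R]_4) : is_sp4 A -> is_sp4 B -> br A B = C ->
  forall v : 'cV[R]_4, Sr A *m (Sr B *m v) = Sr B *m (Sr A *m v) + Sr C *m v.
Proof.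
move=> HA HB HC v; rewrite -HC S_br // /br mulmxBl !mulmxA.
by rewrite addrC subrK.
Qed.
Lemma Sv' (A B C : 'M[R]_4) : is_sp4 A -> is_sp4 B -> br A B = C ->
  forall v : 'cV[R]_4, Sr B *m (Sr A *m v) = Sr A *m (Sr B *m v) - Sr C *m v.
Proof. by move=> HA HB HC v; rewrite (Sv HA HB HC) addrK. Qed.

Hint Resolve spH1 spH2 spHA spHB spX spY spE spF spEp spFp spB spC sp0 : spdb.
Hint Resolve spH1 spH2 spHA spHB spX spY spE spF spEp spFp spB spC sp0 : core.
Ltac spt := repeat match goal with
  | |- is_sp4 (_ + _) => apply: sp_add
  | |- is_sp4 (- _) => apply: sp_opp
  | |- is_sp4 (_ *: _) => apply: sp_scale
  end; auto with spdb.

Lemma Sbr_eq (A B C : 'M[R]_4) : is_sp4 A -> is_sp4 B -> br A B = C ->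
  Sr A *m Sr B - Sr B *m Sr A = Sr C.
Proof. by move=> HA HB HC; rewrite -HC S_br. Qed.

Lemma tr1 : [/\ Sr H1 *m Sr Em - Sr Em *m Sr H1 = 2%:R *: Sr Em,
  Sr H1 *m Sr Fm - Sr Fm *m Sr H1 = - (2%:R *: Sr Fm) & Sr Em *m Sr Fm - Sr Fm *m Sr Em = Sr H1].
Proof.
split; first by rewrite (Sbr_eq spH1 spE b1) S_scale //; spt.
  by rewrite (Sbr_eq spH1 spF b2) S_opp ?S_scale //; spt.
by rewrite (Sbr_eq spE spF b3).
Qed.
Lemma tr2 : [/\ Sr H2 *m Sr Ep - Sr Ep *m Sr H2 = 2%:R *: Sr Ep,
  Sr H2 *m Sr Fp - Sr Fp *m Sr H2 = - (2%:R *: Sr Fp) & Sr Ep *m Sr Fp - Sr Fp *m Sr Ep = Sr H2].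
Proof.
split; first by rewrite (Sbr_eq spH2 spEp b4) S_scale //; spt.
  by rewrite (Sbr_eq spH2 spFp b5) S_opp ?S_scale //; spt.
by rewrite (Sbr_eq spEp spFp b6).
Qed.
Lemma trA : [/\ Sr HA *m Sr Xm - Sr Xm *m Sr HA = 2%:R *: Sr Xm,
  Sr HA *m Sr Ym - Sr Ym *m Sr HA = - (2%:R *: Sr Ym) & Sr Xm *m Sr Ym - Sr Ym *m Sr Xm = Sr HA].
Proof.
split; first by rewrite (Sbr_eq spHA spX b7) S_scale //; spt.
  by rewrite (Sbr_eq spHA spY b8) S_opp ?S_scale //; spt.
by rewrite (Sbr_eq spX spY b9).
Qed.
Lemma trB : [/\ Sr HB *m Sr Bm - Sr Bm *m Sr HB = 2%:R *: Sr Bm,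
  Sr HB *m Sr Cm - Sr Cm *m Sr HB = - (2%:R *: Sr Cm) & Sr Bm *m Sr Cm - Sr Cm *m Sr Bm = Sr HB].
Proof.
split; first by rewrite (Sbr_eq spHB spB b10) S_scale //; spt.
  by rewrite (Sbr_eq spHB spC b11) S_opp ?S_scale //; spt.
by rewrite (Sbr_eq spB spC b12).
Qed.

Lemma two_n0 : (2%:R : R) != 0. Proof. by rewrite pnatr_eq0. Qed.
Lemma mtwo_n0 : (- 2%:R : R) != 0. Proof. by rewrite oppr_eq0 pnatr_eq0. Qed.

Lemma nil_up (h f : 'M[R]_4) : h *m f - f *m h = 2%:R *: f -> exists N, forall v, pv f N v = 0.
Proof. move=> H; exact: (nilpotM two_n0 H). Qed.
Lemma nil_low (h f : 'M[R]_4) : h *m f - f *m h = - (2%:R *: f) -> exists N, forall v, pv f N v = 0.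
Proof. by rewrite -scaleNr; exact: nilpotM mtwo_n0. Qed.

Lemma nilE : exists N, forall v, pv (Sr Em) N v = 0.
Proof. by case: tr1 => H _ _; exact: nil_up H. Qed.
Lemma nilF : exists N, forall v, pv (Sr Fm) N v = 0.
Proof. by case: tr1 => _ H _; exact: nil_low H. Qed.
Lemma nilEp : exists N, forall v, pv (Sr Ep) N v = 0.
Proof. by case: tr2 => H _ _; exact: nil_up H. Qed.
Lemma nilFp : exists N, forall v, pv (Sr Fp) N v = 0.
Proof. by case: tr2 => _ H _; exact: nil_low H. Qed.
Lemma nilY : exists N, forall v, pv (Sr Ym) N v = 0.
Proof. by case: trA => _ H _; exact: nil_low H. Qed.
Lemma nilC : exists N, forall v, pv (Sr Cm) N v = 0.
Proof. by case: trB => _ H _; exact: nil_low H. Qed.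
Lemma nilB : exists N, forall v, pv (Sr Bm) N v = 0.
Proof.
apply: (@nilpotM _ (Sr H1) _ 1); first exact: oner_neq0.
by rewrite (Sbr_eq spH1 spB b13) scale1r.
Qed.
Lemma nilX : exists N, forall v, pv (Sr Xm) N v = 0.
Proof.
apply: (@nilpotM _ (Sr H1) _ 1); first exact: oner_neq0.
by rewrite (Sbr_eq spH1 spX b14) scale1r.
Qed.

Lemma commK (A B C : 'M[R]_4) (v : 'cV[R]_4) : is_sp4 A -> is_sp4 B -> br A B = C ->
  Sr A *m v = 0 -> Sr C *m v = 0 -> Sr A *m (Sr B *m v) = 0.
Proof. by move=> HA HB HC H1v HCv; rewrite (Sv HA HB HC) H1v mulmx0 HCv addr0. Qed.
Lemma commK' (A B C : 'M[R]_4) (v : 'cV[R]_4) : is_sp4 A -> is_sp4 B -> br B A = C ->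
  Sr A *m v = 0 -> Sr C *m v = 0 -> Sr A *m (Sr B *m v) = 0.
Proof. by move=> HA HB HC H1v HCv; rewrite (Sv' HB HA HC) H1v mulmx0 HCv subr0. Qed.
Lemma killH (G H C : 'M[R]_4) (v : 'cV[R]_4) c : is_sp4 G -> is_sp4 H -> br H G = C ->
  Sr G *m v = 0 -> Sr C *m v = 0 -> Sr G *m (Sr H *m v - c *: v) = 0.
Proof.
move=> HG HH HC Gv Cv; rewrite mulmxBr (commK' HG HH HC Gv Cv) -scalemxAr Gv.
by rewrite scaler0 subr0.
Qed.

Lemma Sscv (A : 'M[R]_4) a (v : 'cV[R]_4) : is_sp4 A -> Sr (a *: A) *m v = a *: (Sr A *m v).
Proof. by move=> HA; rewrite S_scale // scalemxAl. Qed.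
Lemma Soppv (A : 'M[R]_4) (v : 'cV[R]_4) : is_sp4 A -> Sr (- A) *m v = - (Sr A *m v).
Proof. by move=> HA; rewrite S_opp // mulNmx. Qed.

Lemma hw_exists : exists (v0 : 'cV[R]_4) (a b : nat),
  [/\ v0 != 0, Sr Em *m v0 = 0, Sr Ep *m v0 = 0, Sr Bm *m v0 = 0 &
   [/\ Sr Xm *m v0 = 0, Sr H1 *m v0 = a%:R *: v0 & Sr H2 *m v0 = b%:R *: v0]].
Proof.
have [NE HNE] := nilE; have [NEp HNEp] := nilEp; have [NB HNB] := nilB.
have [NX HNX] := nilX; have [NF HNF] := nilF; have [NFp HNFp] := nilFp.
have w0n : (delta_mx o0 0 : 'cV[R]_4) != 0.
  apply/eqP => /matrixP /(_ o0 0); rewrite !mxE /= => /eqP; by rewrite oner_eq0.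
have [w1 [_ w1n w1E]] := killer (P := fun _ => True) HNE (fun _ _ => I) I w0n.
have pres2 : forall v : 'cV[R]_4, Sr Em *m v = 0 -> Sr Em *m (Sr Ep *m v) = 0.
  by move=> v Hv; apply: (commK spE spEp b15 Hv); rewrite S_0 mul0mx.
have [w2 [w2E w2n w2Ep]] := killer (P := fun v : 'cV[R]_4 => Sr Em *m v = 0) HNEp pres2 w1E w1n.
have pres3 : forall v : 'cV[R]_4, Sr Em *m v = 0 /\ Sr Ep *m v = 0 ->
    Sr Em *m (Sr Bm *m v) = 0 /\ Sr Ep *m (Sr Bm *m v) = 0.
  move=> v [H1v H2v]; split.
    by apply: (commK spE spB b16 H1v); rewrite S_0 mul0mx.
  by apply: (commK spEp spB b17 H2v); rewrite S_0 mul0mx.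
have [w3 [[w3E w3Ep] w3n w3B]] := killer
  (P := fun v : 'cV[R]_4 => Sr Em *m v = 0 /\ Sr Ep *m v = 0) HNB pres3 (conj w2E w2Ep) w2n.
have pres4 : forall v : 'cV[R]_4, Sr Em *m v = 0 /\ Sr Ep *m v = 0 /\ Sr Bm *m v = 0 ->
    Sr Em *m (Sr Xm *m v) = 0 /\ Sr Ep *m (Sr Xm *m v) = 0 /\ Sr Bm *m (Sr Xm *m v) = 0.
  move=> v [H1v [H2v H3v]]; split; [|split].
  - by apply: (commK' spE spX b18 H1v); rewrite S_0 mul0mx.
  - exact: (commK' spEp spX b19 H2v H3v).
  - by apply: (commK' spB spX b20 H3v); rewrite Sscv ?H1v ?scaler0 //; spt.
have [w4 [[w4E [w4Ep w4B]] w4n w4X]] := killer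
  (P := fun v : 'cV[R]_4 => Sr Em *m v = 0 /\ Sr Ep *m v = 0 /\ Sr Bm *m v = 0) HNX pres4
  (conj w3E (conj w3Ep w3B)) w3n.
pose P5 (v : 'cV[R]_4) := [/\ Sr Em *m v = 0, Sr Ep *m v = 0, Sr Bm *m v = 0 & Sr Xm *m v = 0].
have P5cl : forall (v : 'cV[R]_4) c, P5 v -> P5 (Sr H1 *m v - c *: v).
  move=> v c [vE vEp vB vX]; split.
  - by apply: (killH _ spE spH1 b1 vE); rewrite Sscv ?vE ?scaler0 //; spt.
  - by apply: (killH _ spEp spH1 b21 vEp); rewrite S_0 mul0mx.
  - by apply: (killH _ spB spH1 b13 vB).
  - by apply: (killH _ spX spH1 b14 vX).
case: tr1 => _ t1f t1e.
have [w5 [a [[w5E w5Ep w5B w5X] w5n w5H]]] :=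
  descent t1f t1e HNF P5cl (fun v Hv => let: And4 H _ _ _ := Hv in H) (And4 w4E w4Ep w4B w4X) w4n.
pose P6 (v : 'cV[R]_4) := P5 v /\ Sr H1 *m v = a%:R *: v.
have P6cl : forall (v : 'cV[R]_4) c, P6 v -> P6 (Sr H2 *m v - c *: v).
  move=> v c [[vE vEp vB vX] vH]; split; first split.
  - by apply: (killH _ spE spH2 b22 vE); rewrite S_0 mul0mx.
  - by apply: (killH _ spEp spH2 b4 vEp); rewrite Sscv ?vEp ?scaler0 //; spt.
  - by apply: (killH _ spB spH2 b23 vB).
  - by apply: (killH _ spX spH2 b24 vX); rewrite Soppv ?vX ?oppr0 //; spt.
  rewrite mulmxBr (Sv spH1 spH2 b25) S_0 mul0mx addr0 vH -!scalemxAr vH.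
  move: (Sr H2 *m v) => x; apply/matrixP => i j; rewrite !mxE; ring.
case: tr2 => _ t2f t2e.
have [v0 [b [[[vE vEp vB vX] vH1] v0n vH2]]] :=
  descent t2f t2e HNFp P6cl (fun v Hv => let: And4 _ H _ _ := proj1 Hv in H)
  (conj (And4 w5E w5Ep w5B w5X) w5H) w5n.
by exists v0, a, b; split.
Qed.

Definition HWhyp (v0 : 'cV[R]_4) (a b : nat) :=
  [/\ v0 != 0, Sr Em *m v0 = 0, Sr Ep *m v0 = 0, Sr Bm *m v0 = 0 &
   [/\ Sr Xm *m v0 = 0, Sr H1 *m v0 = a%:R *: v0 & Sr H2 *m v0 = b%:R *: v0]].

Definition wt (u : 'cV[R]_4) (p q : R) := Sr H1 *m u = p *: u /\ Sr H2 *m u = q *: u.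

Lemma wt_shift (G : 'M[R]_4) (k1 k2 : R) u p q : is_sp4 G ->
  (forall v : 'cV[R]_4, Sr (br H1 G) *m v = k1 *: (Sr G *m v)) ->
  (forall v : 'cV[R]_4, Sr (br H2 G) *m v = k2 *: (Sr G *m v)) ->
  wt u p q -> wt (Sr G *m u) (p + k1) (q + k2).
Proof.
move=> HG E1 E2 [W1 W2]; split.
  by rewrite (Sv spH1 HG (erefl _)) W1 E1 -scalemxAr scalerDl.
by rewrite (Sv spH2 HG (erefl _)) W2 E2 -scalemxAr scalerDl.
Qed.

Lemma wtF u p q : wt u p q -> wt (Sr Fm *m u) (p - 2%:R) q.
Proof.
move=> W; have := @wt_shift Fm (- 2%:R) 0 u p q spF.
rewrite addr0; apply => // v.
  by rewrite b2 Soppv ?Sscv ?scaleNr //; spt.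
by rewrite b30 S_0 mul0mx scale0r.
Qed.
Lemma wtFp u p q : wt u p q -> wt (Sr Fp *m u) p (q - 2%:R).
Proof.
move=> W; have := @wt_shift Fp 0 (- 2%:R) u p q spFp.
rewrite addr0; apply => // v.
  by rewrite b31 S_0 mul0mx scale0r.
by rewrite b5 Soppv ?Sscv ?scaleNr //; spt.
Qed.
Lemma wtY u p q : wt u p q -> wt (Sr Ym *m u) (p - 1) (q + 1).
Proof.
move=> W; have := @wt_shift Ym (- 1) 1 u p q spY.
apply => // v.
  by rewrite b26 Soppv ?scaleN1r ?scale1r //; spt.
by rewrite b27 scale1r.
Qed.
Lemma wtC u p q : wt u p q -> wt (Sr Cm *m u) (p - 1) (q - 1).
Proof.
move=> W; have := @wt_shift Cm (- 1) (- 1) u p q spC.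
apply => // v.
  by rewrite b28 Soppv ?scaleN1r //; spt.
by rewrite b29 Soppv ?scaleN1r //; spt.
Qed.

Definition Dm := Sr H1 + 5%:R *: Sr H2.
Lemma wtD u p q : wt u p q -> Dm *m u = (p + 5%:R * q) *: u.
Proof. by move=> [W1 W2]; rewrite /Dm mulmxDl -scalemxAl W1 W2 scalerA scalerDl. Qed.

Lemma five (v : nat -> 'cV[R]_4) (lam : nat -> R) :
  (forall k, (k <= 4)%N -> Dm *m v k = lam k *: v k) ->
  (forall k, (k <= 4)%N -> v k != 0) ->
  (forall i j, (i <= 4)%N -> (j <= 4)%N -> lam i = lam j -> i = j) -> False.
Proof.
move=> Hv Hn Hinj.
have DD : forall x y : 'cV[R]_4, Dm *m (x + y) = Dm *m x + Dm *m y by move=> x y; rewrite mulmxDr.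
have DZ : forall a (x : 'cV[R]_4), Dm *m (a *: x) = a *: (Dm *m x) by move=> a x; rewrite scalemxAr.
have [k Hk Hvk] := @eig_finite R 4 1 (fun x => Dm *m x) DD DZ v lam Hv Hinj.
by move: (Hn k Hk); rewrite Hvk eqxx.
Qed.

Lemma line_contra (v0 : 'cV[R]_4) : v0 != 0 -> (forall i, T i *m v0 = 0) -> False.
Proof.
move=> v0n HT.
pose U : 'M[R]_4 := (const_mx 1 : 'M[R]_(4, 1)) *m v0^T.
have := Hirr (U := U); case.
- move=> i; rewrite /U -mulmxA -trmx_mul HT trmx0 mulmx0; exact: sub0mx.
- move=> U0; move/negP: v0n; apply; apply/eqP/matrixP => i j.
  rewrite (ord1 j) [RHS]mxE.
  by have := congr1 (fun M : 'M[R]_4 => M o0 i) U0; rewrite !mxE big_ord1 !mxE mul1r.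
- rewrite /row_full => /eqP H.
  have := mxrankM_maxl (const_mx 1 : 'M[R]_(4, 1)) v0^T; rewrite -/U H.
  by move=> /leq_trans /(_ (rank_leq_col _)).
Qed.

Lemma S_decv (A : 'M[R]_4) (v : 'cV[R]_4) : is_sp4 A -> Sr A *m v =
  A o0 o0 *: (Sr H1 *m v) + A o1 o1 *: (Sr H2 *m v) + A o0 o1 *: (Sr Xm *m v)
  + A o1 o0 *: (Sr Ym *m v) + A o0 o2 *: (Sr Em *m v) + A o2 o0 *: (Sr Fm *m v)
  + A o1 o3 *: (Sr Ep *m v) + A o3 o1 *: (Sr Fp *m v) + A o0 o3 *: (Sr Bm *m v)
  + A o3 o0 *: (Sr Cm *m v).
Proof.
move=> HA; rewrite {1}(sp4_dec HA) !S_add ?S_scale; try by spt.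
by rewrite !mulmxDl -!scalemxAl.
Qed.

Ltac injt := case=> [|[|[|[|[|?]]]]] //; case=> [|[|[|[|[|?]]]]] //= _ _ ?;
  exfalso; lra.

Lemma injC : forall i j, (i <= 4)%N -> (j <= 4)%N ->
  nth 0 [:: 1%:R + 5%:R * 1%:R; (1%:R - 2%:R) + 5%:R * 1%:R; (1%:R - 1) + 5%:R * (1%:R - 1);
        1%:R + 5%:R * (1%:R - 2%:R); (1%:R - 2%:R) + 5%:R * (1%:R - 2%:R)] i =
  nth 0 [:: 1%:R + 5%:R * 1%:R; (1%:R - 2%:R) + 5%:R * 1%:R; (1%:R - 1) + 5%:R * (1%:R - 1);
        1%:R + 5%:R * (1%:R - 2%:R); (1%:R - 2%:R) + 5%:R * (1%:R - 2%:R)] j :> R -> i = j.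
Proof. injt. Qed.
Lemma injB (a b : R) : forall i j, (i <= 4)%N -> (j <= 4)%N ->
  nth 0 [:: a + 5%:R * b; (a - 2%:R) + 5%:R * b;
        (a - 2%:R - 2%:R) + 5%:R * b; (a - 1) + 5%:R * (b - 1);
        a + 5%:R * (b - 2%:R)] i =
  nth 0 [:: a + 5%:R * b; (a - 2%:R) + 5%:R * b;
        (a - 2%:R - 2%:R) + 5%:R * b; (a - 1) + 5%:R * (b - 1);
        a + 5%:R * (b - 2%:R)] j -> i = j.
Proof. injt. Qed.
Lemma injA (a b : R) : forall i j, (i <= 4)%N -> (j <= 4)%N ->
  nth 0 [:: a + 5%:R * b; (a - 2%:R) + 5%:R * b;
      (a - 2%:R - 2%:R) + 5%:R * b; (a - 1) + 5%:R * (b - 1);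
      (a - 1) + 5%:R * (b + 1)] i =
  nth 0 [:: a + 5%:R * b; (a - 2%:R) + 5%:R * b;
      (a - 2%:R - 2%:R) + 5%:R * b; (a - 1) + 5%:R * (b - 1);
      (a - 1) + 5%:R * (b + 1)] j -> i = j.
Proof. injt. Qed.

Lemma hw_10 v0 a b : HWhyp v0 a b -> (a = 1 /\ b = 0)%N.
Proof.
case=> v0n vE vEp vB [vX vH1 vH2].
have [NF HNF] := nilF; have [NFp HNFp] := nilFp; have [NY HNY] := nilY; have [NC HNC] := nilC.
case: tr1 => _ t1f t1e; case: tr2 => _ t2f t2e; case: trA => _ tAf tAe; case: trB => _ tBf tBe.
have vHA : Sr HA *m v0 = (a%:R - b%:R) *: v0 by rewrite HAE (S_sub spH1 spH2) mulmxBl vH1 vH2 scalerBl.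
have vHB : Sr HB *m v0 = (a + b)%N%:R *: v0 by rewrite HBE (S_add spH1 spH2) mulmxDl vH1 vH2 -scalerDl natrD.
have [m Hm] := D1nat tAf tAe HNY vX vHA v0n.
have ba : (b <= a)%N.
  have : a%:R = (m + b)%N%:R :> R by rewrite natrD -Hm subrK.
  by move/eqP; rewrite eqr_nat => /eqP ->; rewrite leq_addl.
have vHA' : Sr HA *m v0 = (a - b)%N%:R *: v0 by rewrite natrB.
have W0 : wt v0 a%:R b%:R by split.
case: (posnP a) => [a0|apos].
  exfalso; have b0 : b = 0%N by move: ba; rewrite a0 leqn0 => /eqP.
  apply: (line_contra v0n) => i.
  rewrite -S_phi S_decv //.
  have F0 : Sr Fm *m v0 = 0.
    by have := D1b t1f t1e HNF vE vH1 (k := 0); rewrite a0 pvS pv0 => /(_ erefl).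
  have Fp0 : Sr Fp *m v0 = 0.
    by have := D1b t2f t2e HNFp vEp vH2 (k := 0); rewrite b0 pvS pv0 => /(_ erefl).
  have Y0 : Sr Ym *m v0 = 0.
    by have := D1b tAf tAe HNY vX vHA' (k := 0); rewrite a0 b0 pvS pv0 => /(_ erefl).
  have C0 : Sr Cm *m v0 = 0.
    by have := D1b tBf tBe HNC vB vHB (k := 0); rewrite a0 b0 pvS pv0 => /(_ erefl).
  rewrite vH1 vH2 vX Y0 vE F0 vEp Fp0 vB C0 a0 b0 !scale0r !scaler0 !addr0.
  by [].
have F1n : Sr Fm *m v0 != 0.
  by have := D1c t1f t1e HNF vE vH1 (k := a) erefl v0n (j := 1) apos; rewrite pvS pv0.
have Cn : Sr Cm *m v0 != 0.
  have H : (0 < a + b)%N by rewrite addn_gt0 apos.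
  by have := D1c tBf tBe HNC vB vHB (k := a + b) erefl v0n (j := 1) H; rewrite pvS pv0.
have WF := wtF W0; have WC := wtC W0.
have [a1|a2] : a = 1%N \/ (1 < a)%N.
  by move: apos; rewrite leq_eqVlt => /orP [/eqP <-|->]; [left|right].
  move: ba; rewrite a1 leq_eqVlt ltnS leqn0 => /orP [/eqP b1|/eqP b0]; last by [].
  exfalso.
  have Fpn : Sr Fp *m v0 != 0.
    by have := D1c t2f t2e HNFp vEp vH2 (k := b) erefl v0n (j := 1); rewrite b1 pvS pv0; apply.
  have uEp : Sr Ep *m (Sr Fm *m v0) = 0.
    by apply: (commK spEp spF b32 vEp); rewrite S_0 mul0mx.
  have uH2 : Sr H2 *m (Sr Fm *m v0) = 1%:R *: (Sr Fm *m v0) by case: WF => _ ->; rewrite b1.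
  have FpFn : Sr Fp *m (Sr Fm *m v0) != 0.
    by have := D1c t2f t2e HNFp uEp uH2 (k := 1) erefl F1n (j := 1); rewrite pvS pv0; apply.
  have WFp := wtFp W0; have WFpF := wtFp WF.
  rewrite a1 b1 in W0 WF WC WFp WFpF.
  apply: (@five (fun k => nth 0 [:: v0; Sr Fm *m v0; Sr Cm *m v0; Sr Fp *m v0; Sr Fp *m (Sr Fm *m v0)] k)
    (fun k => nth 0 [:: 1%:R + 5%:R * 1%:R; (1%:R - 2%:R) + 5%:R * 1%:R; (1%:R - 1) + 5%:R * (1%:R - 1);
        1%:R + 5%:R * (1%:R - 2%:R); (1%:R - 2%:R) + 5%:R * (1%:R - 2%:R)] k)).
  - move=> k; case: k => [|[|[|[|[|k]]]]] //= _; [exact: wtD W0 | exact: wtD WF | exact: wtD WC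
      | exact: wtD WFp | exact: wtD WFpF].
  - by move=> k; case: k => [|[|[|[|[|k]]]]] //= _.
  - exact: injC.
exfalso.
have F2n : Sr Fm *m (Sr Fm *m v0) != 0.
  by have := D1c t1f t1e HNF vE vH1 (k := a) erefl v0n (j := 2) a2; rewrite !pvS pv0.
have WFF := wtF WF.
move: ba; rewrite leq_eqVlt => /orP [/eqP ba|ba].
  have Fpn : Sr Fp *m v0 != 0.
    have H : (0 < b)%N by rewrite ba apos.
    by have := D1c t2f t2e HNFp vEp vH2 (k := b) erefl v0n (j := 1) H; rewrite pvS pv0.
  have WFp := wtFp W0.
  apply: (@five (fun k => nth 0 [:: v0; Sr Fm *m v0; Sr Fm *m (Sr Fm *m v0); Sr Cm *m v0; Sr Fp *m v0] k)
    (fun k => nth 0 [:: a%:R + 5%:R * b%:R; (a%:R - 2%:R) + 5%:R * b%:R;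
        (a%:R - 2%:R - 2%:R) + 5%:R * b%:R; (a%:R - 1) + 5%:R * (b%:R - 1);
        a%:R + 5%:R * (b%:R - 2%:R)] k)).
  - move=> k; case: k => [|[|[|[|[|k]]]]] //= _; [exact: wtD W0 | exact: wtD WF | exact: wtD WFF
      | exact: wtD WC | exact: wtD WFp].
  - by move=> k; case: k => [|[|[|[|[|k]]]]] //= _.
  - exact: injB.
have Yn : Sr Ym *m v0 != 0.
  have H : (0 < a - b)%N by rewrite subn_gt0.
  by have := D1c tAf tAe HNY vX vHA' (k := a - b) erefl v0n (j := 1) H; rewrite pvS pv0.
have WY := wtY W0.
apply: (@five (fun k => nth 0 [:: v0; Sr Fm *m v0; Sr Fm *m (Sr Fm *m v0); Sr Cm *m v0; Sr Ym *m v0] k)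
  (fun k => nth 0 [:: a%:R + 5%:R * b%:R; (a%:R - 2%:R) + 5%:R * b%:R;
      (a%:R - 2%:R - 2%:R) + 5%:R * b%:R; (a%:R - 1) + 5%:R * (b%:R - 1);
      (a%:R - 1) + 5%:R * (b%:R + 1)] k)).
- move=> k; case: k => [|[|[|[|[|k]]]]] //= _; [exact: wtD W0 | exact: wtD WF | exact: wtD WFF
    | exact: wtD WC | exact: wtD WY].
- by move=> k; case: k => [|[|[|[|[|k]]]]] //= _.
- exact: injA.
Qed.

Definition Pof (vs : 'I_4 -> 'cV[R]_4) : 'M[R]_4 := \matrix_(i, j) vs j i 0.

Lemma act_col (M G : 'M[R]_4) (vs : 'I_4 -> 'cV[R]_4) :
  (forall j, M *m vs j = \sum_k G k j *: vs k) -> M *m Pof vs = Pof vs *m G.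
Proof.
move=> H; apply/matrixP => i j.
have L : (M *m Pof vs) i j = (M *m vs j) i 0.
  by rewrite !mxE; apply: eq_bigr => k _; rewrite /Pof mxE.
have Rr : (Pof vs *m G) i j = (\sum_k G k j *: vs k) i 0.
  by rewrite !mxE summxE; apply: eq_bigr => k _; rewrite /Pof !mxE mulrC.
by rewrite L Rr H.
Qed.

Lemma S_decm (A : 'M[R]_4) : is_sp4 A -> Sr A =
  A o0 o0 *: Sr H1 + A o1 o1 *: Sr H2 + A o0 o1 *: Sr Xm + A o1 o0 *: Sr Ym
  + A o0 o2 *: Sr Em + A o2 o0 *: Sr Fm + A o1 o3 *: Sr Ep + A o3 o1 *: Sr Fp
  + A o0 o3 *: Sr Bm + A o3 o0 *: Sr Cm.
Proof. by move=> HA; rewrite {1}(sp4_dec HA) !S_add ?S_scale; try by spt. Qed.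

Lemma intertw (P : 'M[R]_4) :
  Sr H1 *m P = P *m H1 -> Sr H2 *m P = P *m H2 -> Sr Xm *m P = P *m Xm ->
  Sr Ym *m P = P *m Ym -> Sr Em *m P = P *m Em -> Sr Fm *m P = P *m Fm ->
  Sr Ep *m P = P *m Ep -> Sr Fp *m P = P *m Fp -> Sr Bm *m P = P *m Bm ->
  Sr Cm *m P = P *m Cm -> forall A, is_sp4 A -> Sr A *m P = P *m A.
Proof.
move=> h1 h2 hx hy he hf hep hfp hb hc A HA.
have E := sp4_dec HA; rewrite (S_decm HA) [X in P *m X]E.
rewrite !mulmxDl !mulmxDr -!scalemxAl -!scalemxAr.
by rewrite h1 h2 hx hy he hf hep hfp hb hc.
Qed.

Lemma P_unit (P : 'M[R]_4) : P != 0 -> (forall i, T i *m P = P *m phi i) -> P \in unitmx.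
Proof.
move=> Pn0 HP.
have := Hirr (U := P^T); case.
- by move=> i; rewrite -trmx_mul HP trmx_mul submxMl.
- by move/eqP; rewrite trmx_eq0 (negbTE Pn0).
- by rewrite row_full_unit unitmx_tr.
Qed.

Ltac vring := apply/matrixP => ? ?; rewrite !mxE; ring.
Ltac actt f0 f1 f2 f3 := apply: act_col; apply: ord4P; rewrite /= ?f0 ?f1 ?f2 ?f3
  !big_ord_recl big_ord0 /H1 /H2 /Xm /Ym /Em /Fm /Ep /Fp /Bm /Cm !mxE /=; vring.

Lemma exists_P : exists P : 'M[R]_4, P \in unitmx /\ forall i, T i *m P = P *m phi i.
Proof.
have [v0 [a [b HW]]] := hw_exists.
have [a1 b0] := hw_10 HW.
case: HW => v0n vE vEp vB [vX vH1 vH2].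
rewrite a1 scale1r in vH1; rewrite b0 scale0r in vH2.
have [NF HNF] := nilF; have [NFp HNFp] := nilFp; have [NY HNY] := nilY; have [NC HNC] := nilC.
case: tr1 => _ t1f t1e; case: tr2 => _ t2f t2e; case: trA => _ tAf tAe; case: trB => _ tBf tBe.
have vHA : Sr HA *m v0 = 1%:R *: v0.
  by rewrite HAE (S_sub spH1 spH2) mulmxBl vH1 vH2 subr0 scale1r.
have vHB : Sr HB *m v0 = 1%:R *: v0.
  by rewrite HBE (S_add spH1 spH2) mulmxDl vH1 vH2 addr0 scale1r.
have vH1' : Sr H1 *m v0 = 1%:R *: v0 by rewrite vH1 scale1r.
have vH2' : Sr H2 *m v0 = 0%:R *: v0 by rewrite vH2 scale0r.
have Fp0 : Sr Fp *m v0 = 0.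
  by have := D1b t2f t2e HNFp vEp vH2' (k := 0); rewrite pvS pv0 => /(_ erefl).
have FF0 : Sr Fm *m (Sr Fm *m v0) = 0.
  by have := D1b t1f t1e HNF vE vH1' (k := 1); rewrite !pvS pv0 => /(_ erefl).
have YY0 : Sr Ym *m (Sr Ym *m v0) = 0.
  by have := D1b tAf tAe HNY vX vHA (k := 1); rewrite !pvS pv0 => /(_ erefl).
have CC0 : Sr Cm *m (Sr Cm *m v0) = 0.
  by have := D1b tBf tBe HNC vB vHB (k := 1); rewrite !pvS pv0 => /(_ erefl).
have [v1 Ev1] : exists v1, Sr Ym *m v0 = v1 by eexists.
have [v2 Ev2] : exists v2, Sr Fm *m v0 = v2 by eexists.
have [v3 Ev3] : exists v3, Sr Cm *m v0 = v3 by eexists.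
rewrite Ev1 in YY0; rewrite Ev2 in FF0; rewrite Ev3 in CC0.
have H1v1 : Sr H1 *m v1 = 0.
  by rewrite -Ev1 (Sv spH1 spY b26) vH1 Soppv // subrr.
have H2v1 : Sr H2 *m v1 = v1.
  by rewrite -Ev1 (Sv spH2 spY b27) vH2 mulmx0 add0r.
have Xv1 : Sr Xm *m v1 = v0.
  by rewrite -Ev1 (Sv spX spY b9) vX mulmx0 add0r vHA scale1r.
have Ev1' : Sr Em *m v1 = 0.
  by rewrite -Ev1 (Sv spE spY b33) vE mulmx0 add0r Soppv // vB oppr0.
have Fv1 : Sr Fm *m v1 = 0.
  have H : Sr H1 *m v1 = 0%:R *: v1 by rewrite H1v1 scale0r.
  by have := D1b t1f t1e HNF Ev1' H (k := 0); rewrite pvS pv0 => /(_ erefl).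
have Epv1 : Sr Ep *m v1 = 0.
  by rewrite -Ev1 (Sv spEp spY b34) vEp mulmx0 add0r S_0 mul0mx.
have Fpv1 : Sr Fp *m v1 = v3.
  by rewrite -Ev1 (Sv spFp spY b35) Fp0 mulmx0 add0r.
have Bv1 : Sr Bm *m v1 = 0.
  by rewrite -Ev1 (Sv spB spY b36) vB mulmx0 add0r Soppv ?Sscv ?vEp ?scaler0 ?oppr0 //; spt.
have Yv3 : Sr Ym *m v3 = - (Sr Cm *m v1).
  by rewrite -Fpv1 (Sv' spFp spY b35) YY0 mulmx0 sub0r.
have Cv1 : Sr Cm *m v1 = v2.
  have := Sv spC spY b37 v0; rewrite Ev1 Ev3 Yv3 Sscv // Ev2.
  set x := Sr Cm *m v1 => E.
  apply/matrixP => i j; have := congr1 (fun M : 'cV[R]_4 => M i j) E; rewrite !mxE; lra.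
have Yv3' : Sr Ym *m v3 = - v2 by rewrite Yv3 Cv1.
have H1v2 : Sr H1 *m v2 = - v2.
  rewrite -Ev2 (Sv spH1 spF b2) vH1 Soppv ?Sscv //; last by spt.
  by move: (Sr Fm *m v0) => x; vring.
have H2v2 : Sr H2 *m v2 = 0.
  by rewrite -Ev2 (Sv spH2 spF b30) vH2 mulmx0 S_0 mul0mx addr0.
have Xv2 : Sr Xm *m v2 = - v3.
  by rewrite -Ev2 (Sv spX spF b38) vX mulmx0 add0r Soppv // Ev3.
have Yv2 : Sr Ym *m v2 = 0.
  by rewrite -Ev2 (Sv spY spF b39) Ev1 Fv1 S_0 mul0mx addr0.
have Ev2' : Sr Em *m v2 = v0.
  by rewrite -Ev2 (Sv spE spF b3) vE mulmx0 add0r vH1.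
have Epv2 : Sr Ep *m v2 = 0.
  by rewrite -Ev2 (Sv spEp spF b32) vEp mulmx0 S_0 mul0mx addr0.
have Fpv2 : Sr Fp *m v2 = 0.
  by rewrite -Ev2 (Sv spFp spF b40) Fp0 mulmx0 S_0 mul0mx addr0.
have Bv2 : Sr Bm *m v2 = v1.
  by rewrite -Ev2 (Sv spB spF b41) vB mulmx0 add0r Ev1.
have Ev3' : Sr Em *m v3 = 0.
  by rewrite -Ev3 (Sv spE spC b43) vE mulmx0 add0r vX.
have H1v3 : Sr H1 *m v3 = 0.
  by rewrite -Ev3 (Sv spH1 spC b28) vH1 Soppv // subrr.
have Fv3 : Sr Fm *m v3 = 0.
  have H : Sr H1 *m v3 = 0%:R *: v3 by rewrite H1v3 scale0r.
  by have := D1b t1f t1e HNF Ev3' H (k := 0); rewrite pvS pv0 => /(_ erefl).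
have Cv2 : Sr Cm *m v2 = 0.
  by rewrite -Ev2 (Sv spC spF b42) Ev3 Fv3 S_0 mul0mx addr0.
have H2v3 : Sr H2 *m v3 = - v3.
  by rewrite -Ev3 (Sv spH2 spC b29) vH2 mulmx0 add0r Soppv.
have Xv3 : Sr Xm *m v3 = 0.
  by rewrite -Ev3 (Sv spX spC b44) vX mulmx0 add0r Soppv ?Sscv ?Fp0 ?scaler0 ?oppr0 //; spt.
have Epv3 : Sr Ep *m v3 = v1.
  by rewrite -Ev3 (Sv spEp spC b45) vEp mulmx0 add0r Ev1.
have Fpv3 : Sr Fp *m v3 = 0.
  by rewrite -Ev3 (Sv spFp spC b46) Fp0 mulmx0 S_0 mul0mx addr0.
have Bv3 : Sr Bm *m v3 = v0.
  by rewrite -Ev3 (Sv spB spC b12) vB mulmx0 add0r vHB scale1r.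
pose vs (j : 'I_4) := nth 0 [:: v0; v1; v2; v3] j.
pose P := Pof vs.
have aH1 : Sr H1 *m P = P *m H1 by actt vH1 H1v1 H1v2 H1v3.
have aH2 : Sr H2 *m P = P *m H2 by actt vH2 H2v1 H2v2 H2v3.
have aX : Sr Xm *m P = P *m Xm by actt vX Xv1 Xv2 Xv3.
have aY : Sr Ym *m P = P *m Ym by actt Ev1 YY0 Yv2 Yv3'.
have aE : Sr Em *m P = P *m Em by actt vE Ev1' Ev2' Ev3'.
have aF : Sr Fm *m P = P *m Fm by actt Ev2 Fv1 FF0 Fv3.
have aEp : Sr Ep *m P = P *m Ep by actt vEp Epv1 Epv2 Epv3.
have aFp : Sr Fp *m P = P *m Fp by actt Fp0 Fpv1 Fpv2 Fpv3.
have aB : Sr Bm *m P = P *m Bm by actt vB Bv1 Bv2 Bv3.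
have aC : Sr Cm *m P = P *m Cm by actt Ev3 Cv1 Cv2 CC0.
have HP : forall i, T i *m P = P *m phi i.
  by move=> i; rewrite -S_phi; apply: intertw.
exists P; split => //; apply: P_unit => //.
apply/eqP => P0; move/eqP: v0n; apply; apply/matrixP => i j; rewrite (ord1 j).
have := congr1 (fun M : 'M[R]_4 => M i o0) P0; rewrite !mxE /=.
by [].
Qed.

Lemma br_left (F : 'I_10 -> 'M[R]_4)
  (HF : forall i j, br (F i) (F j) = \sum_k Tv k i j *: F k) (b : 'I_10 -> R) i :
  br (\sum_j b j *: F j) (F i) = \sum_k (\sum_j b j * Tv k j i) *: F k.
Proof.
have E : br (\sum_j b j *: F j) (F i) = \sum_j b j *: br (F j) (F i).
  rewrite /br mulmx_suml mulmx_sumr -sumrB; apply: eq_bigr => j _.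
  by rewrite -scalemxAl -scalemxAr scalerBr.
rewrite E; under eq_bigr => j _ do rewrite HF scaler_sumr.
rewrite exchange_big /=; apply: eq_bigr => k _.
by rewrite scaler_suml; apply: eq_bigr => j _; rewrite scalerA.
Qed.

Lemma br_sp (M : 'M[R]_4) : (forall i, is_sp4 (M *m phi i - phi i *m M)) ->
  forall A, is_sp4 A -> is_sp4 (M *m A - A *m M).
Proof.
move=> H A /phspan [c ->].
have -> : M *m (\sum_i c i *: phi i) - (\sum_i c i *: phi i) *m M =
    \sum_i c i *: (M *m phi i - phi i *m M).
  rewrite mulmx_sumr mulmx_suml -sumrB; apply: eq_bigr => i _.
  by rewrite -scalemxAl -scalemxAr scalerBr.
apply: (big_ind (@is_sp4 R)); [exact: sp0 | exact: sp_add | move=> i _; exact: sp_scale].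
Qed.

Lemma main_fwd (M : 'M[R]_4) (Mv : 'I_10 -> 'I_10 -> R) :
  (forall i, M *m T i - T i *m M = \sum_k Mv k i *: T k) ->
  exists c (bv : 'I_10 -> R), M = c%:M + \sum_k bv k *: T k /\
    forall k i, Mv k i = \sum_j bv j * Tv k j i.
Proof.
move=> HM.
have [P [Pu HP]] := exists_P.
have HiP : forall i, invmx P *m T i = phi i *m invmx P.
  move=> i; rewrite -[in RHS](mulKmx Pu (phi i)) -HP !mulmxA.
  by rewrite -[X in _ = X]mulmxA mulmxV // mulmx1.
have HT : forall k, invmx P *m T k *m P = phi k.
  by move=> k; rewrite HiP -mulmxA mulVmx // mulmx1.
pose M' := invmx P *m M *m P.
have HM' : forall i, M' *m phi i - phi i *m M' = \sum_k Mv k i *: phi k.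
  move=> i.
  have -> : M' *m phi i - phi i *m M' = invmx P *m (M *m T i - T i *m M) *m P.
    rewrite /M' mulmxBr mulmxBl -!mulmxA HP !mulmxA; congr (_ - _).
    by rewrite -HiP.
  rewrite HM mulmx_sumr mulmx_suml; apply: eq_bigr => k _.
  by rewrite -scalemxAr -scalemxAl HT.
have HspM : forall i, is_sp4 (M' *m phi i - phi i *m M') by move=> i; rewrite HM'; apply: sp_sum.
have [c Hc] := norm_sp4 (br_sp HspM spH1) (br_sp HspM spX).
have [bv Hbv] := phspan Hc.
have EM' : M' = c%:M + \sum_k bv k *: phi k by rewrite -Hbv addrC subrK.
exists c, bv; split.
  have -> : M = P *m M' *m invmx P.
    by rewrite /M' !mulmxA mulmxV // mul1mx mulmxK.
  rewrite EM' mulmxDr mulmxDl mul_mx_scalar -scalemxAl mulmxV // mulmx_sumr mulmx_suml.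
  congr (_ + _); first by rewrite scalemx1.
  apply: eq_bigr => k _.
  by rewrite -scalemxAr -scalemxAl -HT !mulmxA mulmxV // mul1mx mulmxK.
move=> k i.
have E : M' *m phi i - phi i *m M' = \sum_k (\sum_j bv j * Tv k j i) *: phi k.
  rewrite EM' mulmxDl mulmxDr mul_scalar_mx mul_mx_scalar opprD addrACA subrr add0r.
  exact: (br_left phbr bv i).
have H : \sum_l (\sum_j bv j * Tv l j i - Mv l i) *: phi l = 0.
  under eq_bigr => l _ do rewrite scalerBl.
  by rewrite sumrB -E HM' subrr.
by have /eqP := phind H k; rewrite subr_eq0 => /eqP ->.
Qed.

Lemma main_bwd (c : R) (bv : 'I_10 -> R) (Mv : 'I_10 -> 'I_10 -> R) :
  (forall k i, Mv k i = \sum_j bv j * Tv k j i) ->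
  forall i, let M := c%:M + \sum_k bv k *: T k in
  M *m T i - T i *m M - \sum_k Mv k i *: T k = 0.
Proof.
move=> HMv i M.
have E : M *m T i - T i *m M = br (\sum_j bv j *: T j) (T i).
  rewrite /M /br mulmxDl mulmxDr mul_scalar_mx mul_mx_scalar.
  by rewrite opprD addrACA subrr add0r.
rewrite E (br_left Tbr bv i) -sumrB big1 // => k _.
by rewrite HMv subrr.
Qed.
End Rep.

Unset Implicit Arguments.

Theorem mainTheorem13 (R : realType)
    (Tv : 'I_10 -> 'I_10 -> 'I_10 -> R) (Ts : 'I_4 -> 'I_10 -> 'I_4 -> R)
    (Hiso : iso_to_sp4 Tv) (Hrep : is_rep Tv Ts) (Hirr : irreducible_rep Ts)
    (Ms : 'I_4 -> 'I_4 -> R) (Mv : 'I_10 -> 'I_10 -> R) :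
  (forall a i b, Mderiv_T Ts Ms Mv a i b = 0) <->
  (exists (c : R) (bv : 'I_10 -> R),
      (forall a b, Ms a b = c * (a == b)%:R + \sum_k bv k * Ts a k b) /\
      (forall i j, Mv i j = \sum_k bv k * Tv i k j)).
Proof.
have [phi [phsp phind phspan phbr]] := Hiso.
pose M : 'M[R]_4 := \matrix_(a, b) Ms a b.
have Mder : forall a i b, Mderiv_T Ts Ms Mv a i b =
    (M *m Tmat Ts i - Tmat Ts i *m M - \sum_k Mv k i *: Tmat Ts k) a b.
  move=> a i b; rewrite /Mderiv_T !mxE summxE.
  congr (_ - _ - _).
  - by apply: eq_bigr => l _; rewrite !mxE.
  - by apply: eq_bigr => l _; rewrite !mxE.
  - by apply: eq_bigr => k _; rewrite !mxE.
split.
- move=> HD.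
  have HM : forall i, M *m Tmat Ts i - Tmat Ts i *m M = \sum_k Mv k i *: Tmat Ts k.
    move=> i; apply/eqP; rewrite -subr_eq0; apply/eqP/matrixP => a b.
    by rewrite -Mder HD mxE.
  have [c [bv [HMe HMv]]] := main_fwd phsp phind phspan phbr Hrep Hirr HM.
  exists c, bv; split.
  + move=> a b; have := congr1 (fun X : 'M[R]_4 => X a b) HMe.
    rewrite !mxE summxE => ->; rewrite mulr_natr; congr (_ + _).
    by apply: eq_bigr => k _; rewrite !mxE.
  + by move=> i j; rewrite HMv.
- move=> [c [bv [HMs HMv]]] a i b.
  have HMe : M = c%:M + \sum_k bv k *: Tmat Ts k.
    apply/matrixP => a' b'; rewrite !mxE summxE HMs mulr_natr; congr (_ + _).
    by apply: eq_bigr => k _; rewrite !mxE.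
  have HMv' : forall k i, Mv k i = \sum_j bv j * Tv k j i by move=> k i'; rewrite HMv.
  by rewrite Mder HMe (main_bwd Hrep c HMv' i) mxE.
Qed.
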